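(* Let $m\in\mathbb{N}$ and let $\{W(t)\}_{t=0}^\infty$ be the standard random walk on the discrete hypercube $\{0,1\}^m$ starting at the origin: $W(0)=0$, and for each $t\in\mathbb{N}$ the vector $W(t)$ is obtained from $W(t-1)$ by choosing an index $i\in\{1,\ldots,m\}$ uniformly at random (independently of the past) and replacing the $i$-th coordinate $W(t-1,i)$ by $1-W(t-1,i)$, leaving the other coordinates unchanged. Then for every $t\in\mathbb{N}$, $$\Pr[W(t)=0]\le 2\left(\frac{t}{m}\right)^{t/2}.$$ *)

(* Defs.v *)
From HB Require Import structures.
From mathcomp Require Import all_boot all_order all_algebra.
From mathcomp Require Import all_classical all_reals all_analysis.
Set Implicit Arguments. Unset Strict Implicit. Unset Printing Implicit Defensive.
Import Order.TTheory GRing.Theory Num.Theory.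
Local Open Scope ring_scope.

(* A point of the hypercube {0,1}^m: coordinates are booleans (false = 0, true = 1),
   indexed by 'I_m (i.e. {1..m} shifted to {0..m-1}). *)
Definition cube (m : nat) := {ffun 'I_m -> bool}.

Definition origin (m : nat) : cube m := [ffun => false].

Definition flip (m : nat) (x : cube m) (i : 'I_m) : cube m :=
  [ffun j => if j == i then ~~ x j else x j].

Definition walk (m : nat) (s : seq 'I_m) : cube m :=
  foldl (@flip m) (origin m) s.

(* The t index choices are i.i.d. uniform on 'I_m, i.e. the sequence
   (i_1,...,i_t) is uniform on t.-tuple 'I_m.  Probability that W(t) = 0: *)
Definition prob_return (R : numFieldType) (m t : nat) : R :=
  (#|[set s : t.-tuple 'I_m | walk s == origin m]|)%:R
  / (#|{: t.-tuple 'I_m}|)%:R.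

(* Main.v *)
Require Import Defs.
From HB Require Import structures.
From mathcomp Require Import all_boot all_order all_algebra.
From mathcomp Require Import all_classical all_reals all_analysis.
From mathcomp Require Import zify.
Import Order.TTheory GRing.Theory Num.Theory.
Set Implicit Arguments. Unset Strict Implicit.
Section Comb.
Variable m : nat.

Definition H (n : nat) (x : cube m) : nat :=
  #|[set s : n.-tuple 'I_m | foldl (@flip m) x s == origin m]|.

Definition D (x : cube m) : nat := #|[set i | x i]|.

Lemma card_tuple_sum n (P : pred (n.+1.-tuple 'I_m)) :
  #|[set s | P s]| = \sum_(a : 'I_m) #|[set s : n.-tuple 'I_m | P [tuple of a :: s]]|.
Proof.
rewrite -sum1dep_card.
have -> : (\sum_(s | P s) 1 = \sum_(p : 'I_m * n.-tuple 'I_m | P [tuple of p.1 :: p.2]) 1)%N.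
  rewrite (reindex (fun p : 'I_m * n.-tuple 'I_m => [tuple of p.1 :: p.2])) //=.
  exists (fun s : n.+1.-tuple 'I_m => (thead s, behead_tuple s)).
    by move=> [a s] _ /=; congr pair; apply: val_inj.
  move=> s _; apply: val_inj => /=.
  by case: s => -[|a s'].
rewrite -(pair_big_dep xpredT (fun (a : 'I_m) (s : n.-tuple 'I_m) => P [tuple of a :: s]) (fun _ _ => 1%N)) /=.
by apply: eq_bigr => a _; rewrite sum1dep_card.
Qed.

Lemma H_S n x : H n.+1 x = (\sum_(a : 'I_m) H n (flip x a))%N.
Proof. by rewrite /H card_tuple_sum. Qed.

Lemma H_0 x : H 0 x = (x == origin m).
Proof.
rewrite /H.
have -> : [set s : 0.-tuple 'I_m | foldl (@flip m) x s == origin m] =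
          [set _ : 0.-tuple 'I_m | x == origin m].
  by apply/setP => s; rewrite !inE tuple0.
case: eqP => _.
  by rewrite cardsT card_tuple.
by apply/eqP; rewrite cards_eq0; apply/eqP/setP => s; rewrite !inE.
Qed.
Lemma flipE (x : cube m) (a i : 'I_m) : flip x a i = if i == a then ~~ x i else x i.
Proof. by rewrite /flip ffunE. Qed.

Lemma D_flip_t (x : cube m) (a : 'I_m) : x a -> D (flip x a) = (D x).-1 /\ (0 < D x)%N.
Proof.
move=> xa.
have E : [set i | flip x a i] = [set i | x i] :\ a.
  apply/setP => i; rewrite !inE flipE; case: eqP => [->|]; by rewrite ?xa.
rewrite /D E (cardsD1 a [set i | x i]) inE xa /=; split => //.
Qed.

Lemma D_flip_f (x : cube m) (a : 'I_m) : ~~ x a -> D (flip x a) = (D x).+1.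
Proof.
move=> xa.
have E : [set i | flip x a i] = a |: [set i | x i].
  apply/setP => i; rewrite !inE flipE; case: eqP => [->|] //=; by rewrite xa.
by rewrite /D E cardsU1 inE xa.
Qed.

Lemma D_origin_eq (x : cube m) : (D x == 0%N) = (x == origin m).
Proof.
rewrite /D cards_eq0; apply/eqP/eqP => [E|->].
  apply/ffunP => i; rewrite ffunE; apply/negbTE/negP => xi.
  by move: (congr1 (fun A : {set 'I_m} => i \in A) E); rewrite !inE xi.
by apply/setP => i; rewrite !inE ffunE.
Qed.

Lemma H_vanish n (x : cube m) : (n < D x)%N -> H n x = 0%N.
Proof.
elim: n x => [|n IH] x lt.
  by rewrite H_0 -D_origin_eq; move: lt; case: (D x).
rewrite H_S big1 // => a _.
apply: IH; case xa: (x a).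
  have [-> _] := D_flip_t xa. by rewrite -ltnS prednK // (leq_ltn_trans _ lt).
rewrite D_flip_f ?xa //; lia.
Qed.
Lemma bern d n : (d.+1 * n ^ d + n ^ d.+1 <= n.+1 ^ d.+1)%N.
Proof.
elim: d => [|d IH]; first by rewrite expn0 !expn1; lia.
move: IH; rewrite !expnS.
set A := (n ^ d)%N; set B := (n.+1 ^ d)%N => IH.
nia.
Qed.

Lemma bern' d n : (d * n ^ d.-1 + n ^ d <= n.+1 ^ d)%N.
Proof. by case: d => [|d] //=; apply: bern. Qed.

Lemma H_bound n (x : cube m) : (H n x <= n ^ D x * (n * m) ^ ((n - D x)./2))%N.
Proof.
elim: n x => [|n IH] x.
  rewrite H_0 -D_origin_eq; case: (D x) => //.
rewrite H_S (bigID (fun a => x a)) /=.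
set d := D x.
set q := ((n.+1 - d)./2)%N.
have S1 : (\sum_(a | x a) H n (flip x a) <= d * (n ^ d.-1 * (n * m) ^ q))%N.
  rewrite (eq_bigl (fun a => a \in [set a | x a])) => [|a]; last by rewrite inE.
  rewrite -[d]/(#|[set a | x a]|) -sum_nat_const; apply: leq_sum => a.
  rewrite inE => xa; have [E dpos] := D_flip_t xa.
  apply: (leq_trans (IH _)); rewrite E -/d.
  have -> : (n - d.-1 = n.+1 - d)%N by lia.
  by [].
have S2 : (\sum_(a | ~~ x a) H n (flip x a) <= n ^ d * (n * m) ^ q)%N.
  case: (ltnP n d.+1) => hd.
    rewrite big1 // => a xa; apply: H_vanish; rewrite D_flip_f //.
  have qpos : (0 < q)%N by rewrite /q; lia.
  apply: (@leq_trans (\sum_(a : 'I_m) n ^ d.+1 * (n * m) ^ q.-1)%N).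
    apply: (@leq_trans (\sum_(a | ~~ x a) n ^ d.+1 * (n * m) ^ q.-1)%N).
      apply: leq_sum => a xa; apply: (leq_trans (IH _)); rewrite D_flip_f // -/d.
      have -> : ((n - d.+1)./2 = q.-1)%N by rewrite /q; lia.
      by [].
    by rewrite [X in (_ <= X)%N](bigID (fun a => x a)) /= leq_addl.
  rewrite sum_nat_const card_ord.
  rewrite -(prednK qpos) expnS expnS.
  set P := ((n * m) ^ q.-1)%N; set Q := (n ^ d)%N.
  nia.
apply: (leq_trans (leq_add S1 S2)).
rewrite mulnA -mulnDl.
apply: leq_mul; first exact: bern'.
clear S1 S2; case: q => [|q']; first by [].
by rewrite leq_exp2r // leq_mul2r leqnSn orbT.
Qed.
End Comb.
Unset Implicit Arguments.
Local Open Scope ring_scope.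
Theorem lemma2p10 (R : realType) (m t : nat) (hm : (0 < m)%N) :
  prob_return R m t <= 2 * ((t%:R / m%:R) `^ (t%:R / 2)).
Proof.
rewrite /prob_return card_tuple card_ord.
have -> : #|[set s : t.-tuple 'I_m | walk s == origin m]| = H t (origin m) by [].
have hN := H_bound t (origin m).
have D0 : D (origin m) = 0%N by apply/eqP; rewrite D_origin_eq.
rewrite D0 expn0 mul1n subn0 in hN.
set N := H t (origin m) in hN *.
case: t N hN => [|t] N hN.
  rewrite expn0 divr1 !mul0r powRr0 mulr1.
  idtac.
  rewrite expn0 in hN. apply: (le_trans (y := 1)); first by rewrite (ler_nat R N 1).
  by rewrite ler1n.
set T : R := t.+1%:R; set M : R := m%:R; set r : R := T / 2.
have Mpos : 0 < M by rewrite ltr0n.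
have Tpos : 0 < T by rewrite ltr0n.
have a : N%:R <= (T * M) `^ r.
  apply: (le_trans (y := ((t.+1 * m) ^ (t.+1)./2)%N%:R)); first by rewrite ler_nat.
  rewrite natrX natrM -/T -/M -powR_mulrn; last by rewrite mulr_ge0 // ltW.
  apply: ler_powR.
    by rewrite /T /M -natrM ler1n muln_gt0.
  rewrite /r /T ler_pdivlMr // -natrM ler_nat. 
  by rewrite muln2 -{2}(odd_double_half t.+1) leq_addl.
have b : (T * M) `^ r = T `^ r * M `^ r by rewrite powRM ?ltW.
have c : M ^+ t.+1 = M `^ r * M `^ r.
  rewrite -powRD; last by rewrite (gt_eqF Mpos) implybT.
  by rewrite /r -splitr powR_mulrn // ltW.
have d : (T / M) `^ r = T `^ r / M `^ r.
  rewrite powRM; [|exact: ltW|by rewrite invr_ge0 ltW]; congr (_ * _).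
  have M0 : 0 <= M by rewrite ler0n.
  have Mi0 : 0 <= M^-1 by rewrite invr_ge0.
  have := powRM r M0 Mi0.
  rewrite divff ?gt_eqF // powR1 => e.
  apply: (mulfI (x := M `^ r)); first by rewrite gt_eqF // powR_gt0.
  by rewrite -e divff // gt_eqF // powR_gt0.
have Mr : 0 < M `^ r by rewrite powR_gt0.
apply: (le_trans (y := (T / M) `^ r)); last first.
  by rewrite ler_peMl ?powR_ge0 // ler1n.
rewrite d natrX -/M c ler_pdivrMr ?mulr_gt0 //.
by rewrite mulrA divfK ?gt_eqF // -b.
Qed.
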